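(* Let $C=(\mathcal P,\mathcal B,\mathcal I)$ be an $(n,\alpha,v,\rho)$-FR code with dual $C^t$. Then for every $k=1,2,\dots,n$, $$M_k(C)=\sum_{i=1}^{v}\mathbb I\big(k>N_i(C^t)\big),$$ where $\mathbb I(P)$ equals $1$ if $P$ holds and $0$ otherwise. Equivalently, with $N_0(C^t)=n$ and $N_v(C^t)=0$, for each $\ell\in\{0,1,\dots,v-1\}$ one has $M_k(C)=v-\ell$ for all integers $k$ with $N_{\ell+1}(C^t)<k\le N_\ell(C^t)$.
   Context: An incidence structure is a triple $(\mathcal P,\mathcal B,\mathcal I)$ with $\mathcal P$ (points) and $\mathcal B$ (blocks) finite sets and $\mathcal I\subseteq \mathcal P\times\mathcal B$; repeated blocks are allowed. An $(n,\alpha,v,\rho)$-FR code is an incidence structure with $|\mathcal B|=n$, $|\mathcal P|=v$, every point incident with exactly $\rho$ blocks and every block incident with exactly $\alpha$ points. The dual of $C=(\mathcal P,\mathcal B,\mathcal I)$ is $C^t=(\mathcal B,\mathcal P,\mathcal I^t)$ with $\mathcal I^t=\{(B,p):(p,B)\in\mathcal I\}$. For an incidence structure $C=(\mathcal P,\mathcal B,\mathcal I)$ and $0\le k\le|\mathcal B|$, the supported file size is $M_k(C)=\min_{\mathcal K\subseteq\mathcal B,|\mathcal K|=k}|\{p\in\mathcal P:\exists B\in\mathcal K,(p,B)\in\mathcal I\}|$ (so $M_0(C)=0$), and $N_k(C)=|\mathcal P|-M_k(C)=\max_{\mathcal K\subseteq\mathcal B,|\mathcal K|=k}|\{p\in\mathcal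 P:\nexists B\in\mathcal K,(p,B)\in\mathcal I\}|$. Thus $N_\ell(C^t)$, for $0\le \ell\le v$, is the maximum over $\ell$-subsets $\mathcal L\subseteq\mathcal P$ of the number of blocks $B\in\mathcal B$ incident with no point of $\mathcal L$. *)

(* Defs.v *)
From mathcomp Require Import all_boot.
Set Implicit Arguments. Unset Strict Implicit. Unset Printing Implicit Defensive.

(* An incidence structure: points of finite type P, blocks of finite type B
   (distinct elements of B may have identical incidence sets, so repeated
   blocks are allowed), and incidence relation I. *)
Record incidence := Incidence {
  pts : finType;
  blks : finType;
  inc : pts -> blks -> bool
}.

Definition dual (C : incidence) : incidence :=
  @Incidence (blks C) (pts C) (fun b p => inc p b).

Definition FR_code (C : incidence) (n alpha v rho : nat) : Prop :=
  [/\ #|blks C| = n, #|pts C| = v,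
      forall p : pts C, #|[set b : blks C | inc p b]| = rho
    & forall b : blks C, #|[set p : pts C | inc p b]| = alpha].

Definition covered (C : incidence) (K : {set blks C}) : {set pts C} :=
  [set p : pts C | [exists b in K, inc p b]].

(* M_k(C): minimum over k-subsets K of blocks of #covered points.
   (The default #|pts C| is only used when no k-subset exists, i.e. k > #|B|.) *)
Definition M (C : incidence) (k : nat) : nat :=
  \big[minn/#|pts C|]_(K : {set blks C} | #|K| == k) #|covered K|.

Definition N (C : incidence) (k : nat) : nat := #|pts C| - M C k.

(* Main.v *)
Require Import Defs.
From mathcomp Require Import all_boot.
From mathcomp Require Import zify.

Lemma bigmin_le (I : finType) (P : pred I) (F : I -> nat) d i :
  P i -> \big[minn/d]_(j | P j) F j <= F i.
Proof.
move=> Pi.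
have : forall s : seq I, i \in s -> \big[minn/d]_(j <- s | P j) F j <= F i.
  elim=> // a s IH; rewrite inE big_cons => /orP[/eqP<-|ins].
    by rewrite Pi geq_minl.
  case: (P a); last exact: IH.
  by apply: leq_trans (geq_minr _ _) (IH ins).
by move/(_ (index_enum I) (mem_index_enum i)).
Qed.

Lemma bigmin_ex (I : finType) (P : pred I) (F : I -> nat) d i0 :
  P i0 -> (forall i, P i -> F i <= d) ->
  exists2 j, P j & \big[minn/d]_(i | P i) F i = F j.
Proof.
move=> Pi0 Hd.
have : \big[minn/d]_(i | P i) F i = d \/
       exists2 j, P j & \big[minn/d]_(i | P i) F i = F j.
  apply: (big_ind (fun x => x = d \/ exists2 j, P j & x = F j)); first by left.
    by move=> x y Hx Hy; rewrite /minn; case: ifP.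
  by move=> i Pi; right; exists i.
case=> // E; exists i0 => //; apply/eqP; rewrite eqn_leq bigmin_le // E Hd //.
Qed.

Lemma subset_card (T : finType) (A : {set T}) m :
  m <= #|A| -> exists2 S : {set T}, S \subset A & #|S| = m.
Proof.
move/card_geqP=> [s [us ss sub]].
exists [set x in s].
  by apply/subsetP=> x; rewrite inE => /sub.
by rewrite cardsE (card_uniqP us).
Qed.

Lemma sum_min v m : \sum_(1 <= i < v.+1) (v - i < m) = minn v m.
Proof.
elim: v => [|v IH]; first by rewrite big_nil; lia.
rewrite big_nat_recl //.
under eq_big_nat => i _ do rewrite subSS.
rewrite IH subn1 /=. case: (ltnP v m) => h /=; lia.
Qed.

Theorem theorem1 (C : incidence) (n alpha v rho : nat) :
  FR_code C n alpha v rho ->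
  forall k : nat, 1 <= k <= n ->
    M C k = \sum_(1 <= i < v.+1) (N (dual C) i < k).
Proof.
case=> Hn Hv _ _ k /andP[k1 kn].
set Mk := M C k.
have key : forall i, i <= v -> (k <= N (dual C) i) = (i + Mk <= v).
  move=> i iv.
  have Lex : exists L : {set pts C}, #|L| == i.
    have := @subset_card _ [set: pts C] i; rewrite cardsT Hv => /(_ iv).
    by case=> S _ HS; exists S; rewrite HS.
  have Kex : exists K : {set blks C}, #|K| == k.
    have := @subset_card _ [set: blks C] k; rewrite cardsT Hn => /(_ kn).
    by case=> S _ HS; exists S; rewrite HS.
  apply/idP/idP.
  - rewrite /N /M /=.
    case: Lex => L0 HL0.
    have [L /eqP HL ->] := @bigmin_ex _ (fun L : {set pts C} => #|L| == i) (fun L : {set pts C} => #|@covered (dual C) L|)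
       #|blks C| _ HL0 (fun L _ => max_card _).
    move=> Hk.
    have : k <= #|~: @covered (dual C) L| by rewrite cardsCs setCK.
    case/subset_card=> K sK HK.
    have H1 : Mk <= #|covered K| by apply: bigmin_le; rewrite /= HK.
    have H2 : covered K \subset ~: L.
      apply/subsetP=> p; rewrite !inE => /existsP[b /andP[bK ipb]].
      apply/negP=> pL; move/subsetP: sK => /(_ b bK); rewrite !inE.
      by move/existsP; apply; exists p; rewrite pL.
    have := subset_leq_card H2; rewrite [#|~: L|]cardsCs setCK Hv HL; lia.
  - move=> Hi.
    case: Kex => K0 HK0.
    have [K /eqP HK EK] := @bigmin_ex _ (fun K : {set blks C} => #|K| == k) (fun K : {set blks C} => #|covered K|)
       #|pts C| _ HK0 (fun K _ => max_card _).
    have : i <= #|~: covered K|.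
      have EK' : Mk = #|covered K| by rewrite /Mk /M EK.
      rewrite [#|~: _|]cardsCs setCK Hv -EK'; lia.
    case/subset_card=> L sL HL.
    have H1 : M (dual C) i <= #|@covered (dual C) L| by apply: bigmin_le; rewrite /= HL.
    have H2 : @covered (dual C) L \subset ~: K.
      apply/subsetP=> b; rewrite !inE => /existsP[p /andP[pL ipb]].
      apply/negP=> bK; move/subsetP: sL => /(_ p pL); rewrite !inE.
      by move/existsP; apply; exists b; rewrite bK.
    have := subset_leq_card H2; rewrite [#|~: K|]cardsCs setCK HK.
    rewrite /N /= => h; apply: leq_trans (leq_sub2l #|blks C| (leq_trans H1 h)); by rewrite subKn ?Hn.
have MkV : Mk <= v.
  have [K1 _ HK1] : exists2 S : {set blks C}, S \subset [set: blks C] & #|S| = k.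
    by apply: subset_card; rewrite cardsT Hn.
  apply: leq_trans (@bigmin_le _ (fun K : {set blks C} => #|K| == k) (fun K => #|covered K|) _ K1 _) _; first by rewrite HK1.
  by rewrite -Hv max_card.
have E : \sum_(1 <= i < v.+1) (N (dual C) i < k) = \sum_(1 <= i < v.+1) (v - i < Mk).
  apply: eq_big_nat => j /andP[j1 jv]; rewrite ltnNge key //; lia.
rewrite E.
by rewrite sum_min (minn_idPr MkV).
Qed.
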